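(* The Mixing method $M_\theta$ with a step size $\theta\in\left(0,\frac{1}{\max_i\|c_i\|_1}\right)$ is a diffeomorphism.
   Context: Let $C\in\mathbb{R}^{n\times n}$ be symmetric with columns $c_i$ and $c_{ii}=0$; $\|\cdot\|_1$ is the $1$-norm and $\|\cdot\|$ the Euclidean norm. $M_\theta$ maps $V\in\mathbb{R}^{k\times n}$ with unit-norm columns to the result of one cyclic pass: for $i=1,\ldots,n$ in order, $v_i:=(v_i-\theta Vc_i)/\|v_i-\theta Vc_i\|$, where $V$ contains the most recent columns. The map is considered on the product of unit spheres. *)

(* Defs.v *)
From HB Require Import structures.
From mathcomp Require Import all_boot all_order all_algebra.
From mathcomp Require Import all_classical all_reals all_analysis.
Set Implicit Arguments. Unset Strict Implicit. Unset Printing Implicit Defensive.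
Import Order.TTheory GRing.Theory Num.Theory.
Import numFieldNormedType.Exports.
Local Open Scope classical_set_scope.
Local Open Scope ring_scope.

Section Smooth.
Context {R : realType} {V W : normedModType R}.

Fixpoint iter_dderiv (vs : seq V) (f : V -> W) : V -> W :=
  match vs with
  | [::] => f
  | v :: vs' => fun x => 'D_v (iter_dderiv vs' f) x
  end.

(* f is C^infinity on the open set U (V finite dimensional): all iterated
   directional derivatives exist and are continuous on U *)
Definition smooth_on (U : set V) (f : V -> W) : Prop :=
  open U /\
  (forall (vs : seq V) (v x : V), U x -> derivable (iter_dderiv vs f) x v) /\
  (forall (vs : seq V) (x : V), U x -> {for x, continuous (iter_dderiv vs f)}).

Definition smooth_near (S : set V) (f : V -> W) : Prop :=
  exists U : set V, exists g : V -> W,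
    S `<=` U /\ smooth_on U g /\ (forall x, S x -> g x = f x).
End Smooth.

Definition diffeo_on {R : realType} {V : normedModType R} (S : set V)
    (f : V -> V) : Prop :=
  (forall x, S x -> S (f x)) /\
  exists h : V -> V,
    (forall x, S x -> S (h x)) /\
    (forall x, S x -> h (f x) = x) /\
    (forall x, S x -> f (h x) = x) /\
    smooth_near S f /\ smooth_near S h.

Section Mixing.
Context {R : realType} {k n : nat}.

Definition enorm (w : 'cV[R]_k) : R := Num.sqrt (\sum_(a < k) w a 0 ^+ 2).

Definition col_norm1 (C : 'M[R]_n) (i : 'I_n) : R := \sum_(j < n) `|C j i|.

Definition unit_cols : set 'M[R]_(k, n) := [set V | forall i, enorm (col i V) = 1].

Definition mix_update (C : 'M[R]_n) (theta : R) (i : 'I_n)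
    (V : 'M[R]_(k, n)) : 'M[R]_(k, n) :=
  let w := col i V - theta *: (V *m col i C) in
  \matrix_(a < k, j < n) (if j == i then w a 0 / enorm w else V a j).

Definition mixing_map (C : 'M[R]_n) (theta : R) (V : 'M[R]_(k, n)) : 'M[R]_(k, n) :=
  foldl (fun V i => mix_update C theta i V) V (enum 'I_n).
End Mixing.

(* Main.v *)
Require Import Defs.
From HB Require Import structures.
From mathcomp Require Import all_boot all_order all_algebra.
From mathcomp Require Import all_classical all_reals all_analysis.
From mathcomp Require Import ring lra.
Import Order.TTheory GRing.Theory Num.Theory.
Import numFieldNormedType.Exports.
Local Open Scope classical_set_scope.
Local Open Scope ring_scope.
Set Implicit Arguments. Unset Strict Implicit. Unset Printing Implicit Defensive.

Section SM.
Context {R : realType} {k n : nat}.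
Local Notation M := 'M[R]_(k, n).

Inductive sm (U : set M) : (M -> R) -> Prop :=
| sm_cst c : sm U (fun _ => c)
| sm_coord a j : sm U (fun x => x a j)
| sm_add f g : sm U f -> sm U g -> sm U (fun x => f x + g x)
| sm_mul f g : sm U f -> sm U g -> sm U (fun x => f x * g x)
| sm_inv f : sm U f -> (forall x, U x -> f x != 0) -> sm U (fun x => (f x)^-1)
| sm_sqrt f : sm U f -> (forall x, U x -> 0 < f x) -> sm U (fun x => Num.sqrt (f x)).

Lemma sm_sub U U' f : U' `<=` U -> sm U f -> sm U' f.
Proof.
move=> sub; elim=> [c|a j|f1 g1 _ ? _ ?|f1 g1 _ ? _ ?|f1 _ ? H|f1 _ ? H].
- exact: sm_cst.
- exact: sm_coord.
- exact: sm_add.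
- exact: sm_mul.
- by apply: sm_inv => // x /sub /H.
- by apply: sm_sqrt => // x /sub /H.
Qed.

Lemma sm_comp U U' f (F : M -> M) : sm U' f ->
  (forall a j, sm U (fun x => F x a j)) -> (forall x, U x -> U' (F x)) ->
  sm U (fun x => f (F x)).
Proof.
move=> + HF HU; elim=> [c|a j|f1 g1 _ ? _ ?|f1 g1 _ ? _ ?|f1 _ ? H|f1 _ ? H].
- exact: sm_cst.
- exact: HF.
- exact: sm_add.
- exact: sm_mul.
- by apply: sm_inv => // x /HU /H.
- by apply: sm_sqrt => // x /HU /H.
Qed.

Lemma diff_sqrt_comp (f : M -> R) x : differentiable f x -> 0 < f x ->
  differentiable (fun y => Num.sqrt (f y)) x.
Proof.
move=> df fx0.
have ds : differentiable (@Num.sqrt R) (f x).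
  by apply/derivable1_diffP; have [h _] := is_derive1_sqrt fx0.
exact: (differentiable_comp df ds).
Qed.

Lemma derive_sqrt_comp (f : M -> R) x v : differentiable f x -> 0 < f x ->
  'D_v (fun y => Num.sqrt (f y)) x = 'D_v f x * (2 * Num.sqrt (f x))^-1.
Proof.
move=> df fx0.
have [ds _] := is_derive1_sqrt fx0.
rewrite deriveE; last exact: diff_sqrt_comp.
have -> : (fun y => Num.sqrt (f y)) = Num.sqrt \o f by [].
rewrite diff_comp //; last exact/derivable1_diffP.
rewrite /= deriv1E // derive1E derive_sqrt // deriveE //.
Qed.


Lemma dd (f : M -> R) x v : differentiable f x -> derivable f x v.
Proof. exact: diff_derivable. Qed.

Lemma sm_diff U f : sm U f -> forall x, U x -> differentiable f x.
Proof.
elim=> [c|a j|f1 g1 _ H1 _ H2|f1 g1 _ H1 _ H2|f1 _ H1 H|f1 _ H1 H] x Ux.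
- exact: differentiable_cst.
- exact: differentiable_coord.
- exact: differentiableD (H1 x Ux) (H2 x Ux).
- exact: differentiableM (H1 x Ux) (H2 x Ux).
- exact: differentiableV (H1 x Ux) (H x Ux).
- exact: diff_sqrt_comp (H1 x Ux) (H x Ux).
Qed.

Lemma derive_coord (x v : M) a j : 'D_v (fun t : M => t a j) x = v a j.
Proof.
have := derive_mx (@derivable_id _ _ x v); rewrite derive_id => E.
by rewrite [in RHS]E mxE.
Qed.

Lemma sm_derive U f v : sm U f ->
  exists g, sm U g /\ forall x, U x -> 'D_v f x = g x.
Proof.
move=> smf; elim: smf => [c|a j|f1 g1 s1 [d1 [sd1 H1]] s2 [d2 [sd2 H2]]
  |f1 g1 s1 [d1 [sd1 H1]] s2 [d2 [sd2 H2]]|f1 s1 [d1 [sd1 H1]] H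
  |f1 s1 [d1 [sd1 H1]] H].
- by exists (fun _ => 0); split; [exact: sm_cst|move=> x _; exact: derive_cst].
- exists (fun _ => v a j); split; [exact: sm_cst|move=> x _].
  exact: derive_coord.
- exists (fun x => d1 x + d2 x); split; first exact: sm_add.
  move=> x Ux; rewrite -H1 // -H2 //.
  have E := (deriveD (dd (v:=v) (sm_diff s1 Ux)) (dd (v:=v) (sm_diff s2 Ux))).
  exact E.
- exists (fun x => f1 x * d2 x + g1 x * d1 x); split.
    by apply: sm_add; apply: sm_mul.
  move=> x Ux; rewrite -H1 // -H2 //.
  exact: (deriveM (dd (v:=v) (sm_diff s1 Ux)) (dd (v:=v) (sm_diff s2 Ux))).
- exists (fun x => (-1) * ((f1 x)^-1 * (f1 x)^-1) * d1 x); split.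
    apply: sm_mul => //; apply: sm_mul; first exact: sm_cst.
    by apply: sm_mul; apply: sm_inv.
  move=> x Ux; rewrite -H1 //.
  rewrite (deriveV (H x Ux) (dd (v:=v) (sm_diff s1 Ux))).
  by rewrite /GRing.scale /= mulN1r -invfM -expr2 mulNr.
- exists (fun x => d1 x * (((fun _ => 2) x * Num.sqrt (f1 x))^-1)); split.
    apply: sm_mul => //; apply: sm_inv.
      by apply: sm_mul; [exact: sm_cst| exact: sm_sqrt].
    by move=> x Ux; rewrite mulf_neq0 // gt_eqF // sqrtr_gt0 H.
  move=> x Ux; rewrite -H1 //.
  exact: (derive_sqrt_comp v (sm_diff s1 Ux) (H x Ux)).
Qed.

Definition SMm (U : set M) (G : M -> M) := forall a j, sm U (fun x => G x a j).

Lemma SMm_diff U G x : SMm U G -> U x -> differentiable G x.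
Proof.
move=> sG Ux.
have -> : G = \sum_(a < k) \sum_(j < n) (fun y => G y a j *: delta_mx a j).
  apply/funext => y; rewrite [LHS]matrix_sum_delta fct_sumE.
  by apply: eq_bigr => a _; rewrite fct_sumE.
apply: differentiable_sum => a; apply: differentiable_sum => j.
by apply: differentiableZl; exact: sm_diff (sG a j) x Ux.
Qed.

Lemma open_near (U : set M) x : open U -> U x -> \forall y \near x, U y.
Proof. by rewrite openE => oU Ux; exact: oU. Qed.

Lemma SMm_iter U G : open U -> SMm U G -> forall vs,
  exists H, SMm U H /\ forall x, U x -> iter_dderiv vs G x = H x.
Proof.
move=> oU sG; elim=> [|v vs [H [sH EH]]] /=.
  by exists G.
have : forall aj : 'I_k * 'I_n, exists g, sm U g /\
    forall x, U x -> 'D_v (fun y => H y aj.1 aj.2) x = g x.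
  by move=> [a j]; exact: sm_derive.
move=> /choice [d Hd].
exists (fun x => \matrix_(a, j) d (a, j) x); split.
  move=> a j.
  have -> : (fun x => (\matrix_(a0, j0) d (a0, j0) x) a j) = d (a, j).
    by apply/funext => x; rewrite mxE.
  by have [] := Hd (a, j).
move=> x Ux.
have nE : \forall y \near x, iter_dderiv vs G y = H y.
  by apply: filterS (open_near oU Ux) => y Uy; exact: EH.
rewrite (near_eq_derive _ nE).
rewrite derive_mx; last exact/diff_derivable/(SMm_diff sH Ux).
apply/matrixP => a j; rewrite !mxE.
by have [_ ->] := Hd (a, j).
Qed.

Lemma SMm_smooth U G : open U -> SMm U G -> smooth_on U G.
Proof.
move=> oU sG; split => //; split.
- move=> vs v x Ux.
  have [H [sH EH]] := SMm_iter oU sG vs.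
  have nE : \forall y \near x, H y = iter_dderiv vs G y.
    by apply: filterS (open_near oU Ux) => y Uy; rewrite EH.
  apply: near_eq_derivable nE _.
  exact/diff_derivable/(SMm_diff sH Ux).
- move=> vs x Ux.
  have [H [sH EH]] := SMm_iter oU sG vs.
  have nE : \forall y \near x, H y = iter_dderiv vs G y.
    by apply: filterS (open_near oU Ux) => y Uy; rewrite EH.
  have cH : {for x, continuous H} := differentiable_continuous (SMm_diff sH Ux).
  rewrite /prop_for /continuous_at (EH x Ux).
  exact: cvg_trans (near_eq_cvg nE) cH.
Qed.


Lemma fold_smooth (S : set M) (F : 'I_n -> M -> M) (p : 'I_n -> M -> R) :
  (forall i, sm setT (p i)) ->
  (forall i, SMm [set y | 0 < p i y] (F i)) ->
  (forall i y, S y -> S (F i y) /\ 0 < p i y) ->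
  forall s G U, open U -> S `<=` U -> SMm U G -> (forall x, S x -> S (G x)) ->
  exists U', open U' /\ S `<=` U' /\
    SMm U' (fun x => foldl (fun V i => F i V) (G x) s).
Proof.
move=> sp sF SF; elim=> [|i s IH] G U oU SU sG SG /=.
  by exists U.
pose U1 := U `&` [set x | 0 < p i (G x)].
have sq : sm U (fun x => p i (G x)).
  by apply: (sm_comp (U' := setT)) => //; apply: sp.
apply: (IH (fun x => F i (G x)) U1).
- rewrite openE => x [Ux px].
  have cq : {for x, continuous (fun x => p i (G x))}.
    exact: differentiable_continuous (sm_diff sq Ux).
  have := cvgr_gt _ cq 0 px.
  rewrite /interior.
  move=> /(_ (nbhs_filter x)) nq.
  by apply: filterS (filterI (open_near oU Ux) nq) => y [Uy qy].
- move=> x Sx; split; first exact: SU.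
  by have [] := SF i (G x) (SG x Sx).
- move=> a j; apply: (@sm_comp U1 [set y | 0 < p i y] (fun y => F i y a j) G).
  + exact: sF.
  + by move=> a' j'; apply: sm_sub (sG a' j') => y [].
  + by move=> y [].
- by move=> x Sx; have [] := SF i (G x) (SG x Sx).
Qed.

End SM.

Section Concrete.
Context {R : realType} {k n : nat} (C : 'M[R]_n) (th : R).
Local Notation M := 'M[R]_(k, n).

Definition yv (V : M) i a := \sum_(b < n) V a b * C b i.
Definition wv (V : M) i a := V a i - th * yv V i a.
Definition pf i (V : M) := \sum_(a < k) wv V i a ^+ 2.
Definition dv (V : M) i := \sum_(a < k) V a i * yv V i a.
Definition Yv (V : M) i := \sum_(a < k) yv V i a ^+ 2.
Definition pinv i (V : M) := th ^+ 2 * dv V i ^+ 2 + (1 - th ^+ 2 * Yv V i).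
Definition tv (V : M) i := - (th * dv V i) + Num.sqrt (pinv i V).
Definition inv_update i (V : M) : M :=
  \matrix_(a, j) if j == i then tv V i * V a i + th * yv V i a else V a j.
Definition hmap (V : M) := foldl (fun V i => inv_update i V) V (rev (enum 'I_n)).

Lemma mix_updateE i V : mix_update C th i V =
  \matrix_(a, j) if j == i then wv V i a / Num.sqrt (pf i V) else V a j.
Proof.
have Ew : forall a, (col i V - th *: (V *m col i C)) a 0 = wv V i a.
  move=> a; rewrite !mxE /wv /yv; congr (_ - _ * _).
  by apply: eq_bigr => b _; rewrite !mxE.
apply/matrixP => a j; rewrite [LHS]mxE [RHS]mxE /enorm.
case: eqP => // _; rewrite Ew /pf; congr (_ / Num.sqrt _).
by apply: eq_bigr => a' _; rewrite Ew.
Qed.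

Lemma sm_sum (U : set M) I (r : seq I) (P : pred I) (F : I -> M -> R) :
  (forall b, sm U (F b)) -> sm U (fun x => \sum_(b <- r | P b) F b x).
Proof.
move=> sF; elim: r => [|b r IH].
  have -> : (fun x : M => \sum_(b <- [::] | P b) F b x) = (fun _ => 0).
    by apply/funext => x; rewrite big_nil.
  exact: sm_cst.
have -> : (fun x => \sum_(b0 <- b :: r | P b0) F b0 x) =
   (fun x => (if P b then F b x else 0) + \sum_(b0 <- r | P b0) F b0 x).
  apply/funext => x; rewrite big_cons; case: (P b) => //.
  by rewrite add0r.
apply: sm_add => //; case: (P b) => //; exact: sm_cst.
Qed.

Lemma sm_yv U i a : sm U (fun V : M => yv V i a).
Proof. by apply: sm_sum => b; apply: sm_mul; [exact: sm_coord|exact: sm_cst]. Qed.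

Lemma sm_wv U i a : sm U (fun V : M => wv V i a).
Proof.
apply: sm_add; first exact: sm_coord.
have -> : (fun V => - (th * yv V i a)) = (fun V => (- th) * yv V i a).
  by apply/funext => V; rewrite mulNr.
by apply: sm_mul; [exact: sm_cst|exact: sm_yv].
Qed.

Lemma sm_sq U (f : M -> R) : sm U f -> sm U (fun x => f x ^+ 2).
Proof. by move=> sf; apply: sm_mul. Qed.

Lemma sm_pf U i : sm U (pf i).
Proof. by apply: sm_sum => a; apply: sm_sq; exact: sm_wv. Qed.

Lemma sm_dv U i : sm U (fun V => dv V i).
Proof. by apply: sm_sum => a; apply: sm_mul; [exact: sm_coord|exact: sm_yv]. Qed.

Lemma sm_Yv U i : sm U (fun V => Yv V i).
Proof. by apply: sm_sum => a; apply: sm_sq; exact: sm_yv. Qed.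

Lemma sm_pinv U i : sm U (pinv i).
Proof.
apply: sm_add.
  by apply: sm_mul; [exact: sm_cst|apply: sm_sq; exact: sm_dv].
apply: sm_add; first exact: sm_cst.
have -> : (fun V => - (th ^+ 2 * Yv V i)) = (fun V => (- th ^+ 2) * Yv V i).
  by apply/funext => V; rewrite mulNr.
by apply: sm_mul; [exact: sm_cst|exact: sm_Yv].
Qed.

Lemma SMm_step i : SMm [set V | 0 < pf i V] (fun V => mix_update C th i V).
Proof.
move=> a j.
have -> : (fun V => mix_update C th i V a j) =
  (fun V => if j == i then wv V i a * (Num.sqrt (pf i V))^-1 else V a j).
  by apply/funext => V; rewrite mix_updateE mxE.
case: eqP => _; last exact: sm_coord.
apply: sm_mul; first exact: sm_wv.
apply: sm_inv; first by apply: sm_sqrt => //; exact: sm_pf.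
by move=> V /= pV; rewrite gt_eqF // sqrtr_gt0.
Qed.

Lemma SMm_inv i : SMm [set V | 0 < pinv i V] (inv_update i).
Proof.
move=> a j.
have -> : (fun V => inv_update i V a j) =
  (fun V => if j == i then tv V i * V a i + th * yv V i a else V a j).
  by apply/funext => V; rewrite mxE.
case: eqP => _; last exact: sm_coord.
apply: sm_add; last by apply: sm_mul; [exact: sm_cst|exact: sm_yv].
apply: sm_mul; last exact: sm_coord.
apply: sm_add; last by apply: sm_sqrt => //; exact: sm_pinv.
have -> : (fun V => - (th * dv V i)) = (fun V => (- th) * dv V i).
  by apply/funext => V; rewrite mulNr.
by apply: sm_mul; [exact: sm_cst|exact: sm_dv].
Qed.

End Concrete.

Section Ineq.
Context {R : realType}.

Lemma comb (A1 B1 Q1 A2 B2 Q2 : R) : 0 <= A1 -> 0 <= Q1 -> B1 ^+ 2 <= A1 * Q1 ->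
  0 <= A2 -> 0 <= Q2 -> B2 ^+ 2 <= A2 * Q2 ->
  (B1 + B2) ^+ 2 <= (A1 + A2) * (Q1 + Q2).
Proof.
move=> a1 q1 h1 a2 q2 h2.
have h3 : B1 ^+ 2 * B2 ^+ 2 <= (A1 * Q1) * (A2 * Q2).
  by apply: ler_pM => //; apply: sqr_ge0.
have X0 : 0 <= A1 * Q2 + A2 * Q1 by apply: addr_ge0; apply: mulr_ge0.
have h4 : (2 * B1 * B2) ^+ 2 <= (A1 * Q2 + A2 * Q1) ^+ 2.
  have : 0 <= (A1 * Q2 - A2 * Q1) ^+ 2 by apply: sqr_ge0.
  nra.
have h5 : 2 * B1 * B2 <= A1 * Q2 + A2 * Q1 by nra.
nra.
Qed.

Lemma cs_gen I (r : seq I) (P : pred I) (f g h : I -> R) :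
  (forall i, 0 <= f i /\ 0 <= h i /\ g i ^+ 2 <= f i * h i) ->
  (\sum_(i <- r | P i) g i) ^+ 2 <=
    (\sum_(i <- r | P i) f i) * (\sum_(i <- r | P i) h i).
Proof.
move=> H.
suff : [/\ 0 <= \sum_(i <- r | P i) f i, 0 <= \sum_(i <- r | P i) h i &
  (\sum_(i <- r | P i) g i) ^+ 2 <=
    (\sum_(i <- r | P i) f i) * (\sum_(i <- r | P i) h i)] by case.
elim: r => [|b r [IH1 IH2 IH3]]; first by rewrite !big_nil expr0n /= mulr0.
rewrite !big_cons; case: (P b) => //.
have [f0 [h0 g0]] := H b.
split; [exact: addr_ge0|exact: addr_ge0|exact: comb].
Qed.

Lemma sum_sq_lin m (u y : 'I_m -> R) (al be : R) :
  \sum_(a < m) (al * u a + be * y a) ^+ 2 =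
  al ^+ 2 * \sum_(a < m) u a ^+ 2 + 2 * al * be * \sum_(a < m) u a * y a +
  be ^+ 2 * \sum_(a < m) y a ^+ 2.
Proof.
rewrite !mulr_sumr -!big_split /=; apply: eq_bigr => a _; ring.
Qed.

Lemma sum_dot_lin m (u y : 'I_m -> R) (al be : R) :
  \sum_(a < m) (al * u a + be * y a) * y a =
  al * \sum_(a < m) u a * y a + be * \sum_(a < m) y a ^+ 2.
Proof.
rewrite !mulr_sumr -!big_split /=; apply: eq_bigr => a _; ring.
Qed.

End Ineq.

Section S.
Context {R : realType} {k n : nat} (C : 'M[R]_n) (th : R).
Local Notation M := 'M[R]_(k, n).
Local Notation S := (@unit_cols R k n).

Lemma unitP (V : M) : S V <-> forall i, \sum_(a < k) V a i ^+ 2 = 1.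
Proof.
have E : forall i, enorm (col i V) = Num.sqrt (\sum_(a < k) V a i ^+ 2).
  by move=> i; rewrite /enorm; congr Num.sqrt; apply: eq_bigr => a _; rewrite mxE.
split => H i.
- have := H i; rewrite E => h.
  have s0 : 0 <= \sum_(a < k) V a i ^+ 2 by apply: sumr_ge0 => a _; apply: sqr_ge0.
  by rewrite -(sqr_sqrtr s0) h expr1n.
- by rewrite E H sqrtr1.
Qed.

Lemma Yv_le (V : M) i : S V -> Yv C V i <= col_norm1 C i ^+ 2.
Proof.
move=> /unitP SV; rewrite /Yv /yv.
apply: (@le_trans _ _ (\sum_(a < k) (col_norm1 C i *
    \sum_(b < n) `|C b i| * V a b ^+ 2))).
  apply: ler_sum => a _; apply: cs_gen => b; split; first exact: normr_ge0.
  split; first by apply: mulr_ge0 => //; apply: sqr_ge0.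
  by rewrite mulrA -expr2 real_normK ?num_real // exprMn mulrC.
rewrite -mulr_sumr exchange_big /=.
have -> : \sum_(b < n) \sum_(a < k) `|C b i| * V a b ^+ 2 = col_norm1 C i.
  by apply: eq_bigr => b _; rewrite -mulr_sumr SV mulr1.
by rewrite expr2.
Qed.

Lemma dv_le (V : M) i : S V -> dv C V i ^+ 2 <= Yv C V i.
Proof.
move=> /unitP SV; rewrite /dv.
rewrite -[Yv C V i]mul1r -(SV i) /Yv.
apply: cs_gen => a; split; first exact: sqr_ge0.
by split; [exact: sqr_ge0|rewrite exprMn].
Qed.

Lemma pf_expand (V : M) i : pf C th i V =
  \sum_(a < k) V a i ^+ 2 - 2 * th * dv C V i + th ^+ 2 * Yv C V i.
Proof.
rewrite /pf /wv.
have -> : \sum_(a < k) (V a i - th * yv C V i a) ^+ 2 =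
    \sum_(a < k) (1 * V a i + (- th) * yv C V i a) ^+ 2.
  by apply: eq_bigr => a _; rewrite mul1r mulNr.
rewrite sum_sq_lin /dv /Yv; ring.
Qed.

Lemma pf_pos (V : M) i : 0 < th -> th * col_norm1 C i < 1 -> S V -> 0 < pf C th i V.
Proof.
move=> th0 thc SV.
have c0 : 0 <= col_norm1 C i by apply: sumr_ge0 => j _; exact: normr_ge0.
have h1 := Yv_le i SV; have h2 := dv_le i SV.
rewrite pf_expand ((unitP V).1 SV i).
set d := dv C V i in h2 *; set Y := Yv C V i in h1 h2 *.
set c := col_norm1 C i in c0 h1 thc.
have h3 : th ^+ 2 * d ^+ 2 < 1.
  have : th ^+ 2 * d ^+ 2 <= th ^+ 2 * c ^+ 2.
    by apply: ler_wpM2l; [exact: sqr_ge0|exact: le_trans h2 h1].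
  have h5 : (th * c) ^+ 2 < 1.
    have h6 := mulr_ge0 (ltW th0) c0; rewrite expr2; nra.
  rewrite exprMn in h5; lra.
have h4 : th * d < 1 by nra.
have : th ^+ 2 * d ^+ 2 <= th ^+ 2 * Y by apply: ler_wpM2l => //; exact: sqr_ge0.
nra.
Qed.

Lemma pinv_pos (V : M) i : 0 < th -> th * col_norm1 C i < 1 -> S V ->
  1 - th ^+ 2 * Yv C V i > 0.
Proof.
move=> th0 thc SV.
have c0 : 0 <= col_norm1 C i by apply: sumr_ge0 => j _; exact: normr_ge0.
have h1 := Yv_le i SV.
have : th ^+ 2 * Yv C V i <= th ^+ 2 * col_norm1 C i ^+ 2.
  by apply: ler_wpM2l => //; exact: sqr_ge0.
have h5 : (th * col_norm1 C i) ^+ 2 < 1.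
  have h6 := mulr_ge0 (ltW th0) c0; rewrite expr2; nra.
rewrite exprMn in h5; lra.
Qed.


Lemma lt_sq_root (s q D : R) : 0 <= q -> q ^+ 2 = s ^+ 2 + D -> 0 < D -> s < q.
Proof.
move=> q0 hq D0; rewrite ltNge; apply/negP => qs.
have h1 : 0 <= (s - q) * (s + q) by apply: mulr_ge0; lra.
have : (s - q) * (s + q) = s ^+ 2 - q ^+ 2 by ring.
lra.
Qed.

Lemma root_unique (r s q D : R) : 0 < r -> 0 <= q -> q ^+ 2 = s ^+ 2 + D -> 0 < D ->
  r ^+ 2 + 2 * s * r = D -> r = - s + q.
Proof.
move=> r0 q0 hq D0 hr.
have h1 : (r + s - q) * (r + s + q) = 0.
  have -> : (r + s - q) * (r + s + q) = (r ^+ 2 + 2 * s * r) + s ^+ 2 - q ^+ 2 by ring.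
  rewrite hr hq; ring.
have h2 : 0 < r + s + q.
  have hq' : q ^+ 2 = (- s) ^+ 2 + D by rewrite sqrrN.
  have := lt_sq_root q0 hq' D0.
  lra.
move/eqP: h1; rewrite mulf_eq0 => /orP [/eqP h|/eqP h]; first lra.
by move: h2; rewrite h ltxx.
Qed.

Lemma t_pos (s q D : R) : 0 <= q -> q ^+ 2 = s ^+ 2 + D -> 0 < D -> 0 < - s + q.
Proof. move=> q0 hq D0; have := lt_sq_root q0 hq D0. lra. Qed.

Lemma yv_upd (V V' : M) i : C i i = 0 ->
  (forall a j, j != i -> V' a j = V a j) -> forall a, yv C V' i a = yv C V i a.
Proof.
move=> Cii H a; rewrite /yv; apply: eq_bigr => b _.
case: (eqVneq b i) => [->|bi]; first by rewrite Cii !mulr0.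
by rewrite H.
Qed.

Lemma step_S (V : M) i : 0 < th -> th * col_norm1 C i < 1 -> S V ->
  S (mix_update C th i V) /\ 0 < pf C th i V.
Proof.
move=> th0 thc SV; have p0 := pf_pos th0 thc SV; split => //.
apply/unitP => j; rewrite mix_updateE.
under eq_bigr do rewrite mxE.
case: eqP => _; last exact: ((unitP V).1 SV j).
have -> : \sum_(a < k) (wv C th V i a / Num.sqrt (pf C th i V)) ^+ 2 =
   (\sum_(a < k) wv C th V i a ^+ 2) / (Num.sqrt (pf C th i V)) ^+ 2.
  by rewrite mulr_suml; apply: eq_bigr => a _; rewrite exprMn exprVn.
by rewrite sqr_sqrtr ?ltW // divff // gt_eqF.
Qed.

Lemma inv_S (V : M) i : 0 < th -> th * col_norm1 C i < 1 -> S V ->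
  S (inv_update C th i V) /\ 0 < pinv C th i V.
Proof.
move=> th0 thc SV; have D0 := pinv_pos th0 thc SV.
have P0 : 0 < pinv C th i V.
  rewrite /pinv; have := sqr_ge0 (dv C V i); have := sqr_ge0 th; nra.
split => //.
apply/unitP => j.
under eq_bigr do rewrite mxE.
case: eqP => _; last exact: ((unitP V).1 SV j).
rewrite sum_sq_lin ((unitP V).1 SV i) mulr1 -/(dv C V i) -/(Yv C V i).
have hq : Num.sqrt (pinv C th i V) ^+ 2 = pinv C th i V by rewrite sqr_sqrtr // ltW.
rewrite /tv; move: hq; rewrite /pinv.
set q := Num.sqrt _; set d := dv C V i; set Y := Yv C V i => hq.
have -> : (- (th * d) + q) ^+ 2 + 2 * (- (th * d) + q) * th * d + th ^+ 2 * Y =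
  q ^+ 2 - th ^+ 2 * d ^+ 2 + th ^+ 2 * Y by ring.
rewrite hq; ring.
Qed.

Lemma inv_step (V : M) i : C i i = 0 -> 0 < th -> th * col_norm1 C i < 1 -> S V ->
  inv_update C th i (mix_update C th i V) = V.
Proof.
move=> Cii th0 thc SV.
set W := mix_update C th i V.
have p0 := pf_pos th0 thc SV.
set r := Num.sqrt (pf C th i V).
have r0 : 0 < r by rewrite sqrtr_gt0.
have r2 : r ^+ 2 = pf C th i V by rewrite sqr_sqrtr // ltW.
have WE : forall a j, W a j = if j == i then wv C th V i a / r else V a j.
  by move=> a j; rewrite /W mix_updateE mxE.
have Wy : forall a, yv C W i a = yv C V i a.
  by apply: yv_upd => // a j /negbTE ji; rewrite WE ji.
have YW : Yv C W i = Yv C V i by apply: eq_bigr => a _; rewrite Wy.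
set e := \sum_(a < k) wv C th V i a * yv C V i a.
have dW : dv C W i = e / r.
  rewrite /dv /e mulr_suml; apply: eq_bigr => a _.
  rewrite WE eqxx Wy; field; by rewrite gt_eqF.
have key : r ^+ 2 + 2 * th * e = 1 - th ^+ 2 * Yv C V i.
  have := (unitP V).1 SV i.
  have -> : \sum_(a < k) V a i ^+ 2 =
      \sum_(a < k) (1 * wv C th V i a + th * yv C V i a) ^+ 2.
    by apply: eq_bigr => a _; rewrite /wv; congr (_ ^+ 2); ring.
  rewrite sum_sq_lin -/(pf C th i V) -r2 -/(Yv C V i) -/e.
  rewrite expr1n !mul1r mulr1 => h; lra.
have D0 := pinv_pos th0 thc SV.
have tW : tv C th W i = r.
  rewrite /tv; symmetry; apply: (@root_unique _ _ _ (1 - th ^+ 2 * Yv C V i)) => //.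
  - rewrite sqr_sqrtr; last by rewrite /pinv; have := sqr_ge0 (dv C W i); have := sqr_ge0 th; rewrite YW; nra.
    by rewrite /pinv YW exprMn.
  - rewrite -key dW; field; by rewrite gt_eqF.
apply/matrixP => a j; rewrite mxE tW Wy.
case: eqP => [->|/eqP ji]; last by rewrite WE (negbTE ji).
rewrite WE eqxx /wv; field; by rewrite gt_eqF.
Qed.

Lemma step_inv (V : M) i : C i i = 0 -> 0 < th -> th * col_norm1 C i < 1 -> S V ->
  mix_update C th i (inv_update C th i V) = V.
Proof.
move=> Cii th0 thc SV.
set W := inv_update C th i V.
set t := tv C th V i.
have D0 := pinv_pos th0 thc SV.
have t0 : 0 < t.
  apply: (@t_pos _ _ (1 - th ^+ 2 * Yv C V i)) => //.
  rewrite sqr_sqrtr; first by rewrite /pinv exprMn.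
  by rewrite /pinv; have := sqr_ge0 (dv C V i); have := sqr_ge0 th; nra.
have WE : forall a j, W a j = if j == i then t * V a i + th * yv C V i a else V a j.
  by move=> a j; rewrite /W mxE.
have Wy : forall a, yv C W i a = yv C V i a.
  by apply: yv_upd => // a j /negbTE ji; rewrite WE ji.
have ww : forall a, wv C th W i a = t * V a i.
  by move=> a; rewrite /wv WE eqxx Wy; ring.
have pW : pf C th i W = t ^+ 2.
  rewrite /pf; under eq_bigr do rewrite ww exprMn.
  by rewrite -mulr_sumr ((unitP V).1 SV i) mulr1.
apply/matrixP => a j; rewrite mix_updateE mxE pW sqrtr_sqr gtr0_norm // ww.
case: eqP => [->|/eqP ji]; last by rewrite WE (negbTE ji).
field; by rewrite gt_eqF.
Qed.
End S.

Lemma fold_S {T I : Type} (S : set T) (F : I -> T -> T) :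
  (forall i y, S y -> S (F i y)) ->
  forall s x, S x -> S (foldl (fun V i => F i V) x s).
Proof. by move=> H; elim=> //= i s IH x Sx; apply: IH; apply: H. Qed.

Section Fold.
Context {T I : Type} (S : set T) (F G : I -> T -> T).

Lemma fold_inv1 : (forall i y, S y -> S (F i y)) ->
  (forall i y, S y -> G i (F i y) = y) ->
  forall s x, S x -> foldl (fun V i => G i V) (foldl (fun V i => F i V) x s) (rev s) = x.
Proof.
move=> HS HI; elim=> //= i s IH x Sx.
by rewrite rev_cons foldl_rcons IH ?HI //; apply: HS.
Qed.

Lemma fold_inv2 : (forall i y, S y -> S (G i y)) ->
  (forall i y, S y -> F i (G i y) = y) ->
  forall s x, S x -> foldl (fun V i => F i V) (foldl (fun V i => G i V) x (rev s)) s = x.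
Proof.
move=> HS HI; elim=> //= i s IH x Sx.
rewrite rev_cons foldl_rcons /= HI ?IH //.
exact: (fold_S HS).
Qed.
End Fold.

Unset Implicit Arguments.
Set Strict Implicit.

Theorem lemma14 (R : realType) (k n : nat) (C : 'M[R]_n) (theta : R) :
  C^T = C ->
  (forall i : 'I_n, C i i = 0) ->
  0 < theta ->
  (forall i : 'I_n, theta * col_norm1 C i < 1) ->
  diffeo_on (@unit_cols R k n) (mixing_map C theta).
Proof.
move=> _ Cii th0 thc.
pose S := @unit_cols R k n.
pose Fs := fun (i : 'I_n) (V : 'M[R]_(k, n)) => mix_update C theta i V.
pose Gs := fun (i : 'I_n) (V : 'M[R]_(k, n)) => inv_update C theta i V.
have FS : forall i y, S y -> S (Fs i y).
  by move=> i y Sy; have [] := step_S th0 (thc i) Sy.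
have GS : forall i y, S y -> S (Gs i y).
  by move=> i y Sy; have [] := inv_S th0 (thc i) Sy.
have sid : SMm setT (fun x : 'M[R]_(k, n) => x).
  by move=> a j; exact: sm_coord.
split.
  by move=> x Sx; exact: (fold_S FS (enum 'I_n) Sx).
exists (hmap C theta); split.
  by move=> x Sx; exact: (fold_S GS (rev (enum 'I_n)) Sx).
split.
  move=> x Sx; apply: (fold_inv1 FS) => // i y Sy.
  exact: inv_step (Cii i) th0 (thc i) Sy.
split.
  move=> x Sx; apply: (fold_inv2 GS) => // i y Sy.
  exact: step_inv (Cii i) th0 (thc i) Sy.
split.
- have [U [oU [SU sU]]] := @fold_smooth R k n S Fs (pf C theta)
    (fun i => sm_pf _ _ _ i) (fun i => SMm_step C theta i)
    (fun i y Sy => step_S th0 (thc i) Sy) (enum 'I_n) (fun x => x) setT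
    openT (fun _ _ => I) sid (fun x Sx => Sx).
  exists U, (mixing_map C theta); split => //; split => //.
  exact: SMm_smooth.
- have [U [oU [SU sU]]] := @fold_smooth R k n S Gs (pinv C theta)
    (fun i => sm_pinv _ _ _ i) (fun i => SMm_inv C theta i)
    (fun i y Sy => inv_S th0 (thc i) Sy) (rev (enum 'I_n)) (fun x => x) setT
    openT (fun _ _ => I) sid (fun x Sx => Sx).
  exists U, (hmap C theta); split => //; split => //.
  exact: SMm_smooth.
Qed.
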